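(* Let $A_\Gamma$ be an Artin group with monoid $A_\Gamma^+$. For any vertex $v=[\alpha]_T$ of $\mathcal D_\Gamma^+$, the map $\iota$ sends the upward link of $[\alpha]_T$ in $\mathcal D_\Gamma^+$ to a full subcomplex of the upward link of $\alpha A_T$ in $\mathcal D_\Gamma$.
   Context: Let $\Gamma$ be a finite simple graph with vertex set $S$, edges $(s,t)$ labelled by integers $m_{st}\ge2$. The Artin group $A_\Gamma$ has presentation $\langle S\mid sts\cdots=tst\cdots \ (\text{both of length } m_{st})\ \forall (s,t)\in E\rangle$ and the Artin monoid $A_\Gamma^+$ has the same positive presentation, regarded as a submonoid of $A_\Gamma$. For $T\subseteq S$, $A_T$, $A_T^+$ are the subgroup/submonoid generated by $T$; $\mathcal S^f$ is the set of $T\subseteq S$ whose Coxeter group $W_T$ (presentation of $A_T$ plus $s^2=e$) is finite. The Deligne complex $\mathcal D_\Gamma$ is the cube complex with vertices the cosets $gA_T$ ($g\in A_\Gamma$, $T\in\mathcal S^f$), ordered by inclusion, where for $gA_T\subseteq gA_{T'}$ the interval $[gA_T,gA_{T'}]$ spans a cube of dimension $|T'\setminus T|$. For $\alpha,\beta\in A_\Gamma^+$ write $\alpha\sim_T\beta$ if $\alpha t=\beta t'$ for some $t,t'\in A_T^+$; $\approx_T$ is its transitive closure and $[\alpha]_T$ the class of $\alpha$. The monoid Deligne complex $\mathcal D_\Gamma^+$ is the cube complex with vertices $[\alpha]_T$ ($\alpha\in A_\Gamma^+$, $T\in\mathcal S^f$) ordered by inclusion, where for $T_1\subseteq T_2$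 in $\mathcal S^f$ the interval $[[\alpha]_{T_1},[\alpha]_{T_2}]$ spans a cube of dimension $|T_2\setminus T_1|$. The map $\iota:\mathcal D_\Gamma^+\to\mathcal D_\Gamma$ sends $[\alpha]_T\mapsto\alpha A_T$ (an embedding of cube complexes). The link of a vertex $v$ in a cube complex is the simplicial complex with a $k$-simplex for each $(k+1)$-cube containing $v$ (vertices correspond to edges at $v$, i.e. to vertices adjacent to $v$). The upward (resp. downward) link of a vertex $v$ in $\mathcal D_\Gamma^+$ or $\mathcal D_\Gamma$ is the subcomplex of its link spanned by the vertices corresponding to adjacent vertices (cosets) that contain (resp. are contained in) the coset $v$. A subcomplex $K$ of a simplicial complex $L$ is full if any set of vertices of $K$ spanning a simplex in $L$ spans a simplex in $K$. *)

(* Defs.v *)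
From Stdlib Require Import Relations.
From mathcomp Require Import all_boot.
From Stdlib Require List.

Set Implicit Arguments.
Unset Strict Implicit.
Unset Printing Implicit Defensive.

(* Artin / Coxeter data.  The defining graph Gamma has vertex set S    *)
(* (a finType), edge relation e, and labels m s t (meaningful on edges)*)

Section Artin.
Variables (S : finType) (e : rel S) (m : S -> S -> nat).

Fixpoint alt (s t : S) (n : nat) : seq S :=
  if n is n'.+1 then s :: alt t s n' else [::].

Definition braidL (s t : S) : seq S := alt s t (m s t).
Definition braidR (s t : S) : seq S := alt t s (m s t).

(* letter (s, true) = s, (s, false) = s^-1 *)
Definition gword := seq (S * bool).
Definition pos (w : seq S) : gword := map (fun s => (s, true)) w.

Inductive gstep : gword -> gword -> Prop :=
| GFree (u v : gword) (s : S) (b : bool) :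
    gstep (u ++ [:: (s, b); (s, ~~ b)] ++ v) (u ++ v)
| GBraid (u v : gword) (s t : S) : e s t ->
    gstep (u ++ pos (braidL s t) ++ v) (u ++ pos (braidR s t) ++ v).

Definition geq : gword -> gword -> Prop := clos_refl_sym_trans gword gstep.

Definition in_coset (g : gword) (T : {set S}) (h : gword) : Prop :=
  exists u : gword, all (fun x => x.1 \in T) u /\ geq h (g ++ u).

Inductive mstep : seq S -> seq S -> Prop :=
| MBraid (u v : seq S) (s t : S) : e s t ->
    mstep (u ++ braidL s t ++ v) (u ++ braidR s t ++ v).

Definition meq : seq S -> seq S -> Prop := clos_refl_sym_trans (seq S) mstep.

Definition simT (T : {set S}) (a b : seq S) : Prop :=
  exists t t' : seq S, all (mem T) t /\ all (mem T) t' /\ meq (a ++ t) (b ++ t').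

Definition in_class (a : seq S) (T : {set S}) (b : seq S) : Prop :=
  clos_refl_trans (seq S) (simT T) a b.

Inductive cstep (T : {set S}) : seq S -> seq S -> Prop :=
| CSq (u v : seq S) (s : S) : s \in T ->
    cstep T (u ++ [:: s; s] ++ v) (u ++ v)
| CBraid (u v : seq S) (s t : S) : s \in T -> t \in T -> e s t ->
    cstep T (u ++ braidL s t ++ v) (u ++ braidR s t ++ v).

Definition ceq (T : {set S}) : seq S -> seq S -> Prop :=
  clos_refl_sym_trans (seq S) (cstep T).

Definition spherical (T : {set S}) : Prop :=
  exists L : seq (seq S), forall w : seq S, all (mem T) w ->
    exists2 w', w' \in L & ceq T w w'.

End Artin.

(* Generic cube complex whose vertices are "classes" cls x T (x a      *)
(* representative, T in S^f), ordered by inclusion, and whose cubes    *)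
(* are the intervals [cls x T1, cls x T2] (T1 \subset T2), with vertex *)
(* set { cls x U | T1 \subset U \subset T2 }.                          *)

Section CubeComplex.
Variables (S : finType) (X Y : Type) (cls : X -> {set S} -> Y -> Prop)
          (sph : {set S} -> Prop).

Definition vtx := (X * {set S})%type.

Definition is_vtx (v : vtx) : Prop := sph v.2.

Definition veq (v w : vtx) : Prop :=
  v.2 = w.2 /\ forall y, cls v.1 v.2 y <-> cls w.1 w.2 y.

Definition vle (v w : vtx) : Prop := forall y, cls v.1 v.2 y -> cls w.1 w.2 y.

(* a cube: (x, T1, T2) standing for the interval [cls x T1, cls x T2] *)
Definition cube := (X * {set S} * {set S})%type.

Definition is_cube (c : cube) : Prop :=
  sph c.1.2 /\ sph c.2 /\ c.1.2 \subset c.2.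

Definition cube_edge (c : cube) (v w : vtx) : Prop :=
  exists U U' : {set S},
    [/\ c.1.2 \subset U, U \subset c.2, c.1.2 \subset U', U' \subset c.2 &
     [/\ veq v (c.1.1, U), veq w (c.1.1, U') &
         #|(U :\: U') :|: (U' :\: U)| = 1]].

Definition adjacent (v w : vtx) : Prop :=
  is_vtx v /\ is_vtx w /\
  exists c : cube, [/\ is_cube c, #|c.2 :\: c.1.2| = 1 & cube_edge c v w].

(* a (finite) set sigma of vertices of link(v) spans a simplex of link(v):
   there is a cube containing v among whose edges at v are all [v, w],
   w \in sigma (simplices of link(v) <-> cubes containing v) *)
Definition link_simplex (v : vtx) (sigma : seq vtx) : Prop :=
  (forall w, List.In w sigma -> adjacent v w) /\
  exists c : cube, is_cube c /\ forall w, List.In w sigma -> cube_edge c v w.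

Definition up_vertex (v w : vtx) : Prop := adjacent v w /\ vle v w.

(* simplices of the upward link (full subcomplex of the link spanned by
   the upward vertices) *)
Definition up_simplex (v : vtx) (sigma : seq vtx) : Prop :=
  (forall w, List.In w sigma -> up_vertex v w) /\ link_simplex v sigma.

End CubeComplex.

Definition D_up_vertex (S : finType) (e : rel S) (m : S -> S -> nat) :=
  @up_vertex S (gword S) (gword S) (in_coset e m) (spherical e m).
Definition D_up_simplex (S : finType) (e : rel S) (m : S -> S -> nat) :=
  @up_simplex S (gword S) (gword S) (in_coset e m) (spherical e m).
Definition Dplus_up_vertex (S : finType) (e : rel S) (m : S -> S -> nat) :=
  @up_vertex S (seq S) (seq S) (in_class e m) (spherical e m).
Definition Dplus_up_simplex (S : finType) (e : rel S) (m : S -> S -> nat) :=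
  @up_simplex S (seq S) (seq S) (in_class e m) (spherical e m).

Definition iota_emb (S : finType) (v : vtx S (seq S)) : vtx S (gword S) :=
  (pos v.1, v.2).

(* Main.v *)
Require Import Defs.
From Stdlib Require Import Relations.
From mathcomp Require Import all_boot.
Set Implicit Arguments.
Unset Strict Implicit.
Unset Printing Implicit Defensive.

Section H.
Variables (S : finType) (e : rel S) (m : S -> S -> nat).
Local Notation geq := (Defs.geq e m).

Lemma geq_refl x : geq x x. Proof. exact: rst_refl. Qed.
Lemma geq_sym x y : geq x y -> geq y x. Proof. exact: rst_sym. Qed.
Lemma geq_trans x y z : geq x y -> geq y z -> geq x z. Proof. exact: rst_trans. Qed.

Lemma gstep_ctx c d a b : gstep e m a b -> gstep e m (c ++ a ++ d) (c ++ b ++ d).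
Proof.
move=> H; case: H => [u v s bb|u v s t Hst].
- have := GFree e m (c ++ u) (v ++ d) s bb.
  by rewrite -!catA.
- have := GBraid m (c ++ u) (v ++ d) Hst.
  by rewrite /pos -!catA.
Qed.

Lemma geq_ctx c d a b : geq a b -> geq (c ++ a ++ d) (c ++ b ++ d).
Proof.
elim=> [x y H|x|x y _ IH|x y z _ IH1 _ IH2].
- by apply: rst_step; apply: gstep_ctx.
- exact: geq_refl.
- exact: geq_sym.
- exact: geq_trans IH2.
Qed.

Lemma geq_catl c a b : geq a b -> geq (c ++ a) (c ++ b).
Proof. by move=> H; have := geq_ctx c [::] H; rewrite !cats0. Qed.
Lemma geq_catr d a b : geq a b -> geq (a ++ d) (b ++ d).
Proof. by move=> H; have := geq_ctx [::] d H. Qed.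
Lemma geq_cat a a' b b' : geq a a' -> geq b b' -> geq (a ++ b) (a' ++ b').
Proof. move=> H1 H2; apply: geq_trans (geq_catr _ H1) (geq_catl _ H2). Qed.

Definition ginv (u : gword S) : gword S := rev (map (fun x => (x.1, ~~ x.2)) u).

Lemma ginvK u : ginv (ginv u) = u.
Proof.
rewrite /ginv map_rev revK -map_comp -[RHS]map_id.
by apply: eq_map => -[x b] /=; rewrite negbK.
Qed.

Lemma geq_cat_inv u : geq (u ++ ginv u) [::].
Proof.
elim: u => [|[s b] u IH] /=; first exact: geq_refl.
rewrite /ginv /= rev_cons -cats1 -/(ginv u).
apply: geq_trans (_ : geq ([:: (s, b)] ++ [::] ++ [:: (s, ~~ b)]) _).
  by rewrite catA; have := geq_ctx [:: (s, b)] [:: (s, ~~ b)] IH; rewrite catA.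
apply: rst_step; exact: (GFree e m [::] [::] s b).
Qed.

Lemma geq_inv_cat u : geq (ginv u ++ u) [::].
Proof. by have := geq_cat_inv (ginv u); rewrite ginvK. Qed.

Lemma geq_cancel p x y : geq (p ++ x) (p ++ y) -> geq x y.
Proof.
move=> H.
apply: geq_trans (_ : geq ((ginv p ++ p) ++ x) _).
  by have := geq_catr x (geq_inv_cat p); apply: geq_sym.
apply: geq_trans (_ : geq ((ginv p ++ p) ++ y) _).
  by rewrite -!catA; apply: geq_catl.
exact: geq_catr (geq_inv_cat p) .
Qed.

Lemma geq_move a b u : geq a (b ++ u) -> geq b (a ++ ginv u).
Proof.
move=> H.
apply: geq_trans (_ : geq (b ++ u ++ ginv u) _).
  by have := geq_catl b (geq_cat_inv u); rewrite cats0; apply: geq_sym.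
by rewrite catA; apply: geq_catr; apply: geq_sym.
Qed.

Definition inT (T : {set S}) (u : gword S) := all (fun x => x.1 \in T) u.

Lemma inT_cat T u v : inT T (u ++ v) = inT T u && inT T v.
Proof. exact: all_cat. Qed.
Lemma inT_inv T u : inT T (ginv u) = inT T u.
Proof. by rewrite /inT /ginv all_rev all_map. Qed.
Lemma inT_pos (T : {set S}) (t : seq S) : all (mem T) t -> inT T (pos t).
Proof. by rewrite /inT /pos all_map. Qed.

Lemma meq_pos a b : meq e m a b -> geq (pos a) (pos b).
Proof.
elim=> [x y H|x|x y _ IH|x y z _ IH1 _ IH2].
- case: H => u v s t Hst; rewrite /pos !map_cat.
  apply: rst_step; exact: (GBraid m (pos u) (pos v) Hst).
- exact: geq_refl.
- exact: geq_sym.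
- exact: geq_trans IH2.
Qed.

Lemma simT_sym T a b : simT e m T a b -> simT e m T b a.
Proof.
by case=> t [t' [H1 [H2 H3]]]; exists t', t; split; [|split]; last exact: rst_sym.
Qed.

Lemma simT_coset T a b : simT e m T a b ->
  exists u, inT T u /\ geq (pos a) (pos b ++ u).
Proof.
case=> t [t' [Ht [Ht' H]]].
exists (pos t' ++ ginv (pos t)); split.
  by rewrite inT_cat inT_inv !inT_pos.
have H' := meq_pos H; rewrite /pos !map_cat -/(pos _) -/(pos _) -/(pos _) -/(pos _) in H'.
apply: geq_trans (_ : geq ((pos a ++ pos t) ++ ginv (pos t)) _).
  by rewrite -catA; have := geq_catl (pos a) (geq_cat_inv (pos t)); rewrite cats0;
     apply: geq_sym.
by rewrite catA; apply: geq_catr.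
Qed.

Lemma class_coset a T b : in_class e m a T b ->
  exists u, inT T u /\ geq (pos b) (pos a ++ u).
Proof.
elim=> [x y H|x|x y z _ [u1 [Hu1 H1]] _ [u2 [Hu2 H2]]].
- by apply: simT_coset; apply: simT_sym.
- by exists [::]; split => //; rewrite cats0; apply: geq_refl.
- exists (u1 ++ u2); split; first by rewrite inT_cat Hu1.
  apply: geq_trans H2 _; rewrite catA; exact: geq_catr.
Qed.

Lemma in_class_sym a T b : in_class e m a T b -> in_class e m b T a.
Proof.
elim=> [x y H|x|x y z _ IH1 _ IH2].
- by apply: rt_step; apply: simT_sym.
- exact: rt_refl.
- exact: rt_trans IH2 IH1.
Qed.

Lemma coset_fwd g g' T u : inT T u -> geq g' (g ++ u) ->
  forall h, in_coset e m g T h -> in_coset e m g' T h.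
Proof.
move=> Hu Hg h [w [Hw Hh]].
exists (ginv u ++ w); split; first by change (inT T (ginv u ++ w)); rewrite inT_cat inT_inv Hu.
apply: geq_trans Hh _; rewrite catA; apply: geq_catr; exact: geq_move.
Qed.

Lemma coset_bwd g g' T u : inT T u -> geq g' (g ++ u) ->
  forall h, in_coset e m g' T h -> in_coset e m g T h.
Proof.
move=> Hu Hg h [w [Hw Hh]].
exists (u ++ w); split; first by change (inT T (u ++ w)); rewrite inT_cat Hu.
apply: geq_trans Hh _; rewrite catA; exact: geq_catr.
Qed.

Local Notation Pveq := (@veq S (seq S) (seq S) (in_class e m)).
Local Notation Dveq := (@veq S (gword S) (gword S) (in_coset e m)).

Lemma veq_transfer (v w : vtx S (seq S)) : Pveq v w -> Dveq (iota_emb v) (iota_emb w).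
Proof.
case: v w => [a U] [x U'] [/= HU Hy]; subst U'.
have [u [Hu Hg]] := class_coset (proj1 (Hy a) (rt_refl _ _ a)).
split=> //= y; split; first exact: coset_bwd Hu Hg y.
exact: coset_fwd Hu Hg y.
Qed.

Lemma edge_transfer (c : cube S (seq S)) v w :
  cube_edge (in_class e m) c v w ->
  cube_edge (in_coset e m) (pos c.1.1, c.1.2, c.2) (iota_emb v) (iota_emb w).
Proof.
case=> U [U' [H1 H2 H3 H4 [Hv Hw Hc]]].
exists U, U'; split=> //; split=> //.
- exact: (veq_transfer Hv).
- exact: (veq_transfer Hw).
Qed.

Lemma adj_transfer v w :
  adjacent (in_class e m) (spherical e m) v w ->
  adjacent (in_coset e m) (spherical e m) (iota_emb v) (iota_emb w).
Proof.
case=> Hv [Hw [c [Hc Hcard Hed]]]; split=> //; split=> //.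
exists (pos c.1.1, c.1.2, c.2); split=> //; exact: edge_transfer.
Qed.

Lemma vle_transfer (v w : vtx S (seq S)) :
  vle (in_class e m) v w -> vle (in_coset e m) (iota_emb v) (iota_emb w).
Proof.
case: v w => [alpha T] [beta T'] H /=.
rewrite /vle /= in H *.
have [u0 [Hu0 H0]] := class_coset (H alpha (rt_refl _ _ _)).
have Hs : forall s, s \in T -> exists ws, inT T' ws /\ Defs.geq e m [:: (s, true)] ws.
  move=> s Hs.
  have Hc : in_class e m alpha T (alpha ++ [:: s]).
    apply: rt_step; exists [:: s], [::]; split; first by rewrite /= Hs.
    by split=> //; rewrite cats0; apply: rst_refl.
  have [us [Hus H1]] := class_coset (H _ Hc).
  exists (ginv u0 ++ us); split; first by rewrite inT_cat inT_inv Hu0.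
  apply: (@geq_cancel (pos alpha)).
  rewrite /pos map_cat -/(pos _) in H1.
  apply: geq_trans H1 _; rewrite catA; apply: geq_catr; exact: geq_move.
have Hl : forall x, x.1 \in T -> exists wx, inT T' wx /\ Defs.geq e m [:: x] wx.
  move=> [s b] /= Hx; have [ws [Hws Hg]] := Hs s Hx.
  case: b; first by exists ws.
  exists (ginv ws); split; first by rewrite inT_inv.
  apply: geq_trans (_ : Defs.geq e m ([:: (s, false)] ++ ws ++ ginv ws) _).
    by have := geq_catl [:: (s, false)] (geq_cat_inv ws); rewrite cats0; apply: geq_sym.
  rewrite catA; apply: geq_trans (_ : Defs.geq e m (([:: (s, false)] ++ [:: (s, true)]) ++ ginv ws) _).
    by apply: geq_catr; apply: geq_catl; apply: geq_sym.
  apply: rst_step; exact: (GFree e m [::] (ginv ws) s false).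
have Hword : forall u, inT T u -> exists u', inT T' u' /\ Defs.geq e m u u'.
  elim=> [|x u IH] /=; first by exists [::]; split=> //; apply: geq_refl.
  case/andP=> Hx Hu; have [wx [Hwx Hgx]] := Hl x Hx; have [u' [Hu' Hg]] := IH Hu.
  exists (wx ++ u'); split; first by rewrite inT_cat Hwx.
  exact: (geq_cat Hgx Hg).
move=> y [u [Hu Hy]].
have [u' [Hu' Hg]] := Hword u Hu.
exists (u0 ++ u'); split; first by change (inT T' (u0 ++ u')); rewrite inT_cat Hu0.
apply: geq_trans Hy _; rewrite catA; exact: geq_cat.
Qed.

End H.

Theorem lemma5p7 (S : finType) (e : rel S) (m : S -> S -> nat) :
  symmetric e -> irreflexive e ->
  (forall s t, m s t = m t s) -> (forall s t, e s t -> 2 <= m s t) ->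
  forall (alpha : seq S) (T : {set S}), spherical e m T ->
  let v := (alpha, T) in
  (* iota maps the upward link of [alpha]_T into that of alpha A_T *)
  (forall w, Dplus_up_vertex e m v w -> D_up_vertex e m (iota_emb v) (iota_emb w)) /\
  (forall sigma, Dplus_up_simplex e m v sigma ->
     D_up_simplex e m (iota_emb v) (map (@iota_emb S) sigma)) /\
  (* and its image is a full subcomplex *)
  (forall sigma, (forall w, List.In w sigma -> Dplus_up_vertex e m v w) ->
     D_up_simplex e m (iota_emb v) (map (@iota_emb S) sigma) ->
     Dplus_up_simplex e m v sigma).
Proof.
move=> _ _ _ _ alpha T HT v.
have P1 : forall w, Dplus_up_vertex e m v w -> D_up_vertex e m (iota_emb v) (iota_emb w).
  move=> w [Ha Hl]; split; [exact: adj_transfer | exact: vle_transfer].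
split; first exact: P1.
split.
  move=> sigma [Hv [Hadj [c [Hc Hedge]]]].
  split.
    by move=> w' /List.in_map_iff [w [<- Hw]]; apply: P1; apply: Hv.
  split.
    by move=> w' /List.in_map_iff [w [<- Hw]]; apply: adj_transfer; apply: Hadj.
  exists (pos c.1.1, c.1.2, c.2); split; first exact: Hc.
  move=> w' /List.in_map_iff [w [<- Hw]]; apply: edge_transfer; exact: Hedge.
move=> sigma Hup [_ [_ [c [[Hc1 [Hc2 Hc12]] Hedge]]]].
split; first exact: Hup.
split; first by move=> w Hw; exact: (Hup w Hw).1.
exists (alpha, c.1.2, c.2); split; first by split; [|split].
move=> w Hw.
have [_ Hvle] := Hup w Hw.
have [U [U' [H1 H2 H3 H4 [Hv Hw' Hcard]]]] := Hedge (iota_emb w) (List.in_map _ _ _ Hw).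
case: Hv => /= HTU _; case: Hw' => /= HwU _.
exists U, U'; split=> //; split=> //.
- by rewrite /v HTU; split.
- split=> //= y.
  have Ha : in_class e m w.1 w.2 alpha by apply: Hvle; exact: rt_refl.
  rewrite -HwU; split=> Hy.
  + exact: rt_trans (in_class_sym Ha) Hy.
  + exact: rt_trans Ha Hy.
Qed.
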